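(* Let $\nu\in\mathbb{Z}_{\ge0}\cup\{\infty\}$ be a changepoint, $T$ a random sequence length and $\tau$ a detection time; let $\Delta\tau:=\tau-\nu$, $\Delta T:=T-\nu$ and $\Delta T^*_{\max}:=\inf\{t\mid P(\Delta T\le t)=1\}<\infty$. Assume (independent censoring) that conditionally on $\{\nu<\infty,\Delta\tau\ge0\}$, $\Delta\tau$ and $\Delta T$ are independent. Then $$\mathbb{E}[\Delta\tau\mid\nu<\infty,\ 0\le\Delta\tau\le\Delta T^*_{\max}]-\mathbb{E}[\Delta\tau\mid\nu<\infty,\ 0\le\Delta\tau\le\Delta T]\ge0.$$
   Context: $\tau$ is the detection time of an online changepoint detector; all conditional expectations are assumed well defined (conditioning events of positive probability). *)

(* Defs.v *)
From HB Require Import structures.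
From mathcomp Require Import all_boot all_order all_algebra.
From mathcomp Require Import all_classical all_reals all_analysis.
Set Implicit Arguments. Unset Strict Implicit. Unset Printing Implicit Defensive.
Import Order.TTheory GRing.Theory Num.Theory.
Local Open Scope classical_set_scope.
Local Open Scope ring_scope.

(* The changepoint nu takes values in N u {oo},
   modelled as [option nat] (None = oo).  T and tau are nat-valued. *)

Section Defs.
Context {d : measure_display} {Omega : measurableType d} {R : realType}.

Definition level_measurable {X : Type} (f : Omega -> X) : Prop :=
  forall x : X, measurable [set w | f w = x].

Definition delta (s : Omega -> nat) (nu : Omega -> option nat) : Omega -> \bar R :=
  fun w => match nu w with
           | Some n => ((s w)%:R - n%:R)%:E
           | None => -oo%E
           end.

Definition ess_max (P : probability Omega R) (X : Omega -> \bar R) : \bar R :=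
  ereal_inf [set t%:E | t in [set t : R | P [set w | (X w <= t%:E)%E] = 1%E]].

Definition cond_exp (P : probability Omega R) (A : set Omega) (X : Omega -> \bar R)
  : \bar R := ((\int[P]_(w in A) X w) * ((fine (P A))^-1)%:E)%E.

Definition cond_indep (P : probability Omega R) (B : set Omega)
  (X Y : Omega -> \bar R) : Prop :=
  forall S1 S2 : set (\bar R),
    (P (B `&` X @^-1` S1 `&` Y @^-1` S2) * P B
     = P (B `&` X @^-1` S1) * P (B `&` Y @^-1` S2))%E.

End Defs.

(* Main.v *)
Require Import Defs.
From HB Require Import structures.
From mathcomp Require Import all_boot all_order all_algebra.
From mathcomp Require Import all_classical all_reals all_analysis.
From mathcomp Require Import ring lra measurable_realfun.
Import Order.TTheory GRing.Theory Num.Theory.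
Local Open Scope classical_set_scope.
Local Open Scope ring_scope.
Lemma meas_gen (d : measure_display) (Omega : measurableType d)
  (nu : Omega -> option nat) (T tau : Omega -> nat)
  (mnu : @level_measurable d Omega (option nat) nu) (mlen : level_measurable T)
  (mtau : level_measurable tau) (S : set Omega) :
  (forall w w', nu w = nu w' -> T w = T w' -> tau w = tau w' -> S w -> S w') ->
  measurable S.
Proof.
move=> hS.
pose F : nat -> set Omega := fun n =>
  match (unpickle n : option (option nat * nat * nat)) with
  | Some (o1, a1, b1) => [set w | nu w = o1] `&` [set w | T w = a1] `&`
      [set w | tau w = b1] `&` [set w : Omega | exists w', S w' /\ nu w' = o1 /\ T w' = a1 /\ tau w' = b1]
  | None => set0 end.
have -> : S = \bigcup_n F n.
  apply/seteqP; split => [w Sw|w [n _]].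
    exists (pickle (nu w, T w, tau w)) => //.
    by rewrite /F pickleK; split; [split; [split|]|]; rewrite //=; exists w.
  rewrite /F; case: (unpickle n) => [x|] //; case: x => p b1; case: p => o1 a1.
  move=> /= -[] -[] -[] h1 h2 h3 -[] w2 -[] Sw2 -[] h1b -[] h2b h3b.
  by apply: (hS w2); congruence.
apply: bigcupT_measurable => n; rewrite /F.
case: (unpickle n) => [x|] //; case: x => p b1; case: p => o1 a1.
apply: measurableI; first by apply: measurableI; [apply: measurableI|]; [apply: mnu|apply: mlen|apply: mtau].
case: (pselect (exists w', S w' /\ nu w' = o1 /\ T w' = a1 /\ tau w' = b1)) => h.
  have -> : [set w : Omega | exists w', S w' /\ nu w' = o1 /\ T w' = a1 /\ tau w' = b1] = setT.
    by apply: funext => w; apply: propext; split.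
  exact: measurableT.
have -> : [set w : Omega | exists w', S w' /\ nu w' = o1 /\ T w' = a1 /\ tau w' = b1] = set0
  by apply: funext => w; apply: propext; split => // hw; apply: h.
by [].
Qed.

Lemma decomp (d : measure_display) (Omega : measurableType d) (R : realType)
  (P : probability Omega R)
  (nu : Omega -> option nat) (T tau : Omega -> nat)
  (mnu : @level_measurable d Omega (option nat) nu) (mlen : level_measurable T)
  (mtau : level_measurable tau) (A : set Omega) (K : nat) :
  measurable A ->
  (forall w, A w -> nu w <> None /\ (0 <= delta (R:=R) tau nu w)%E) ->
  P (A `&` [set w | (K%:R%:E < delta (R:=R) tau nu w)%E]) = 0%E ->
  (\int[P]_(w in A) delta (R:=R) tau nu w =
     \sum_(0 <= k < K.+1) (k%:R%:E * P (A `&` [set w | delta (R:=R) tau nu w = k%:R%:E])))%E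
  /\ P A = (\sum_(0 <= k < K.+1) P (A `&` [set w | delta (R:=R) tau nu w = k%:R%:E]))%E.
Proof.
move=> mA hA hN.
set X := delta (R:=R) tau nu.
have mgen := @meas_gen d Omega nu T tau mnu mlen mtau.
have mE : forall k : nat, measurable [set w | X w = k%:R%:E].
  by move=> k; apply: mgen => w w' h1 h2 h3; rewrite /X /delta /= h1 h3.
have mXN : measurable [set w | (K%:R%:E < X w)%E].
  by apply: mgen => w w' h1 h2 h3; rewrite /X /delta /= h1 h3.
set F := fun k : nat => A `&` [set w | X w = k%:R%:E].
set N := A `&` [set w | (K%:R%:E < X w)%E].
have mF : forall k, measurable (F k) by move=> k; apply: measurableI.
have mN : measurable N by apply: measurableI.
have trF : trivIset setT F.
  move=> i j _ _ [w [[_ /= hi] [_ /= hj]]].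
  have h : (j%:R%:E : \bar R) = i%:R%:E by rewrite -hi -hj.
  by apply/eqP; rewrite eq_sym -(eqr_nat R); apply/eqP; exact: EFin_inj.
have AUN : A = \big[setU/set0]_(k <- index_iota 0 K.+1) F k `|` N.
  apply/seteqP; split => [w Aw|w]; last first.
    case=> [|[]//]; rewrite -bigcup_seq => -[k _ []] //.
  have [hnu h0] := hA w Aw.
  case: (leP (X w) (K%:R%:E)) => hX; last by right.
  left; rewrite -bigcup_seq.
  case E: (nu w) hnu => [n|//] _.
  have h0' : (0 <= (tau w)%:R - n%:R :> R) by move: h0; rewrite /X /delta E lee_fin.
  have hnt : (n <= tau w)%N by rewrite -(ler_nat R) -subr_ge0.
  have hX' : ((tau w)%:R - n%:R <= K%:R :> R).
    by move: hX; rewrite /X /delta E lee_fin.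
  exists (tau w - n)%N.
    rewrite /= mem_index_iota leq0n /= ltnS -(ler_nat R) natrB //.
  split => //; rewrite /F /X /delta /= E natrB //.
have disjUN : \big[setU/set0]_(k <- index_iota 0 K.+1) F k `&` N = set0.
  apply/seteqP; split => // w []; rewrite -bigcup_seq => -[k /=].
  rewrite mem_index_iota => /andP[_ hk] [_ /= hXk] [_ /= hKX].
  move: hKX; rewrite hXk lte_fin ltr_nat => hKk; move: hk; rewrite ltnS => hk.
  by move: (leq_trans hKk hk); rewrite ltnn.
have mU : measurable (\big[setU/set0]_(k <- index_iota 0 K.+1) F k).
  by apply: bigsetU_measurable => k _.
have mfX : measurable_fun A X.
  move=> _ Y mY; apply: measurableI => //.
  by apply: mgen => w w' h1 h2 h3; rewrite /preimage /X /delta /= h1 h3.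
split.
  rewrite {1}AUN ge0_integral_setU //; last 3 first.
  - by rewrite -AUN.
  - by rewrite -AUN => w /hA [].
  - by rewrite disj_set2E disjUN.
  rewrite (null_set_integral mN) //; last first.
    by apply: measurable_funS mfX => //; apply: subIsetl.
  rewrite adde0 ge0_integral_bigsetU //; last 4 first.
  - exact: iota_uniq.
  - by apply: sub_trivIset trF.
  - by apply: measurable_funS mfX => //; rewrite [X in _ `<=` X]AUN; apply: subsetUl.
  - move=> w hw; apply: (proj2 (hA w _)); rewrite AUN; by left.
  apply: eq_bigr => k _.
  rewrite (eq_integral (cst (k%:R%:E))) ?integral_cst //.
  by move=> w; rewrite inE => -[_ ->].
rewrite {1}AUN measureU //.
have hN2 : P N = 0%E by exact: hN.
rewrite [X in _ + X = _](_ : _ = 0%E); last exact: hN.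
rewrite adde0 big_mkord measure_bigsetU //.
by rewrite big_mkord.
Qed.

Lemma key0 (R : realFieldType) (n : nat) (p h : nat -> R) :
  (forall k, 0 <= p k) -> (forall i j, (i <= j)%N -> h j <= h i) ->
  0 < \sum_(0 <= k < n) p k -> 0 < \sum_(0 <= k < n) p k * h k ->
  (\sum_(0<=k<n) k%:R * (p k * h k)) / (\sum_(0<=k<n) p k * h k)
   <= (\sum_(0<=k<n) k%:R * p k) / (\sum_(0<=k<n) p k).
Proof.
move=> p0 hmon s1 s2.
rewrite ler_pdivrMr // mulrAC ler_pdivlMr //.
set D := \sum_(0<=i<n) \sum_(0<=j<n) i%:R * p i * p j * (h j - h i).
have eD : (\sum_(0<=k<n) k%:R * p k) * (\sum_(0<=k<n) p k * h k)
   - (\sum_(0<=k<n) k%:R * (p k * h k)) * (\sum_(0<=k<n) p k) = D.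
  rewrite !big_distrl /= -sumrB; apply: eq_bigr => i _.
  rewrite !big_distrr /= -sumrB; apply: eq_bigr => j _; ring.
have eD2 : D + D = \sum_(0<=i<n) \sum_(0<=j<n) p i * p j * ((i%:R - j%:R) * (h j - h i)).
  rewrite {2}/D exchange_big /= -big_split /=; apply: eq_bigr => i _.
  rewrite -big_split /=; apply: eq_bigr => j _; ring.
have D2 : 0 <= D + D.
  rewrite eD2; apply: sumr_ge0 => i _; apply: sumr_ge0 => j _.
  apply: mulr_ge0; first exact: mulr_ge0.
  case: (leqP i j) => hij.
    apply: mulr_le0; rewrite subr_le0 ?ler_nat //; exact: hmon.
  apply: mulr_ge0; rewrite subr_ge0 ?ler_nat; [exact: ltnW| apply: hmon; exact: ltnW].
rewrite -subr_ge0 eD; lra.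
Qed.

Lemma key (R : realFieldType) (n : nat) (p h q : nat -> R) :
  (forall k, 0 <= p k) -> (forall i j, (i <= j)%N -> h j <= h i) ->
  (forall k, q k = p k * h k) ->
  0 < \sum_(0 <= k < n) p k -> 0 < \sum_(0 <= k < n) q k ->
  (\sum_(0<=k<n) k%:R * q k) / (\sum_(0<=k<n) q k)
   <= (\sum_(0<=k<n) k%:R * p k) / (\sum_(0<=k<n) p k).
Proof.
move=> p0 hmon hq s1 s2.
have e1 : \sum_(0<=k<n) q k = \sum_(0<=k<n) p k * h k by apply: eq_bigr => k _.
have e2 : \sum_(0<=k<n) k%:R * q k = \sum_(0<=k<n) k%:R * (p k * h k)
  by apply: eq_bigr => k _; rewrite hq.
rewrite e1 e2; apply: key0 => //; by rewrite -e1.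
Qed.

Lemma Xnat (d : measure_display) (Omega : measurableType d) (R : realType)
  (nu : Omega -> option nat) (s : Omega -> nat) (w : Omega) :
  nu w <> None -> (0 <= delta (R:=R) s nu w)%E ->
  exists j : nat, delta (R:=R) s nu w = j%:R%:E.
Proof.
rewrite /delta; case: (nu w) => [n _|//].
rewrite lee_fin subr_ge0 ler_nat => hn.
by exists (s w - n)%N; rewrite natrB.
Qed.

Theorem lemmaB8 (d : measure_display) (Omega : measurableType d) (R : realType)
  (P : probability Omega R)
  (nu : Omega -> option nat) (T tau : Omega -> nat)
  (mnu : @level_measurable d Omega (option nat) nu) (mlen : level_measurable T)
  (mtau : level_measurable tau)
  (hmax : (ess_max P (delta T nu) < +oo)%E)
  (hindep : cond_indep P [set w | nu w <> None /\ (0 <= (delta tau nu w : \bar R))%E]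
              (delta tau nu) (delta T nu))
  (hpos1 : (0 < P [set w | nu w <> None /\
              (0 <= (delta tau nu w : \bar R))%E /\
              (delta tau nu w <= ess_max P (delta T nu))%E])%E)
  (hpos2 : (0 < P [set w | nu w <> None /\
              (0 <= (delta tau nu w : \bar R))%E /\
              ((delta tau nu w : \bar R) <= delta T nu w)%E])%E) :
  (0 <= cond_exp P [set w | nu w <> None /\
              (0 <= (delta tau nu w : \bar R))%E /\
              (delta tau nu w <= ess_max P (delta T nu))%E] (delta tau nu)
      - cond_exp P [set w | nu w <> None /\
              (0 <= (delta tau nu w : \bar R))%E /\
              ((delta tau nu w : \bar R) <= delta T nu w)%E] (delta tau nu))%E.
Proof.
set X := delta (R:=R) tau nu.
set Y := delta (R:=R) T nu.
set M := ess_max P Y.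
set B := [set w | nu w <> None /\ (0 <= X w)%E].
set A1 := [set w | nu w <> None /\ (0 <= X w)%E /\ (X w <= M)%E].
set A2 := [set w | nu w <> None /\ (0 <= X w)%E /\ (X w <= Y w)%E].
have mgen := @meas_gen d Omega nu T tau mnu mlen mtau.
have mB : measurable B by apply: mgen => w w' h1 h2 h3; rewrite /B /X /delta /= h1 h3.
have mA1 : measurable A1 by apply: mgen => w w' h1 h2 h3; rewrite /A1 /X /delta /= h1 h3.
have mA2 : measurable A2 by apply: mgen => w w' h1 h2 h3; rewrite /A2 /X /Y /delta /= h1 h2 h3.
have Pfin : forall A, measurable A -> P A = (fine (P A))%:E.
  move=> A mA; rewrite fineK // ge0_fin_numE //.
  exact: (le_lt_trans (probability_le1 P mA)) (ltry _).
have : A1 != set0 by apply/eqP => h; move: hpos1; rewrite -/A1 h measure0 ltxx.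
move=> /set0P [w0 [_ [hw0 hw0M]]].
have M0 : (0 <= M)%E by apply: le_trans hw0 hw0M.
have Mfin : M \is a fin_num by rewrite ge0_fin_numE.
set m := fine M.
have Mm : M = m%:E by rewrite fineK.
have m0 : 0 <= m by rewrite -lee_fin -Mm.
set K := Num.truncn m.
have /andP [hK1 hK2] := truncn_itv m0.
have hlt : (M < (K.+1)%:R%:E)%E by rewrite Mm lte_fin.
have [y [t /= ht <-] ty] := ereal_inf_lt hlt.
have mYt : measurable [set w | (Y w <= t%:E)%E].
  by apply: mgen => w w' h1 h2 h3; rewrite /Y /delta /= h1 h2.
have mtY : measurable [set w | (t%:E < Y w)%E].
  by apply: mgen => w w' h1 h2 h3; rewrite /Y /delta /= h1 h2.
have hnull : P [set w | (t%:E < Y w)%E] = 0%E.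
  have -> : [set w | (t%:E < Y w)%E] = ~` [set w | (Y w <= t%:E)%E].
    apply: funext => w; apply: propext; rewrite /setC /= ltNge.
    by split => [/negP|/negP].
  by rewrite probability_setC // ht subee.
have mXK : measurable [set w | ((K%:R)%:E < X w)%E].
  by apply: mgen => w w' h1 h2 h3; rewrite /X /delta /= h1 h3.
have hA1N : P (A1 `&` [set w | ((K%:R)%:E < X w)%E]) = 0%E.
  suff -> : A1 `&` [set w | ((K%:R)%:E < X w)%E] = set0 by rewrite measure0.
  apply/seteqP; split => // w [[hnu [h0 hXM]] /= hKX].
  have [j hj] : exists j : nat, X w = j%:R%:E := @Xnat d Omega R nu tau w hnu h0.
  rewrite hj Mm lee_fin in hXM; rewrite hj lte_fin ltr_nat in hKX.
  have h : (K.+1)%:R <= j%:R :> R by rewrite ler_nat.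
  by have := le_lt_trans hXM (lt_le_trans hK2 h); rewrite ltxx.
have hA2N : P (A2 `&` [set w | ((K%:R)%:E < X w)%E]) = 0%E.
  apply/eqP; rewrite eq_le measure_ge0 andbT -hnull; apply: le_measure; rewrite ?inE //.
  - exact: measurableI.
  - move=> w [[hnu [h0 hXY]] /= hKX].
    have [j hj] : exists j : nat, X w = j%:R%:E := @Xnat d Omega R nu tau w hnu h0.
    rewrite hj lte_fin ltr_nat in hKX.
    apply: (lt_le_trans ty); apply: le_trans hXY; rewrite hj lee_fin ler_nat.
    exact: hKX.
have [I1 P1] := @decomp d Omega R P nu T tau mnu mlen mtau A1 K mA1
  (fun w h => conj (proj1 h) (proj1 (proj2 h))) hA1N.
have [I2 P2] := @decomp d Omega R P nu T tau mnu mlen mtau A2 K mA2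
  (fun w h => conj (proj1 h) (proj1 (proj2 h))) hA2N.
have mXk : forall k : nat, measurable (X @^-1` [set (k%:R)%:E]).
  by move=> k; apply: mgen => w w' h1 h2 h3; rewrite /X /delta /preimage /= h1 h3.
have mYk : forall k : nat, measurable (Y @^-1` [set y | ((k%:R)%:E <= y)%E]).
  by move=> k; apply: mgen => w w' h1 h2 h3; rewrite /Y /delta /preimage /= h1 h2.
have mE : forall k : nat, measurable [set w | X w = (k%:R)%:E].
  by move=> k; apply: mgen => w w' h1 h2 h3; rewrite /X /delta /= h1 h3.
have e1 : forall k, (k <= K)%N ->
    A1 `&` [set w | X w = (k%:R)%:E] = B `&` X @^-1` [set (k%:R)%:E].
  move=> k hk; apply: funext => w; apply: propext; split.
    by move=> [[hnu [h0 _]] hX].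
  move=> [[hnu h0] /= hX]; split => //; split => //; split => //.
  rewrite hX Mm lee_fin; apply: le_trans hK1; by rewrite ler_nat.
have e2 : forall k,
    A2 `&` [set w | X w = (k%:R)%:E] =
    B `&` X @^-1` [set (k%:R)%:E] `&` Y @^-1` [set y | ((k%:R)%:E <= y)%E].
  move=> k; apply: funext => w; apply: propext; split.
    by move=> [[hnu [h0 hXY]] /= hX]; split => //=; rewrite -hX.
  by move=> [[[hnu h0] /= hX] /= hY]; split => //; split => //; split => //; rewrite hX.
set p := fun k : nat => fine (P (B `&` X @^-1` [set (k%:R)%:E])).
set g := fun k : nat => fine (P (B `&` Y @^-1` [set y | ((k%:R)%:E <= y)%E])).
set bb := fine (P B).
set q := fun k : nat => fine (P (A2 `&` [set w | X w = (k%:R)%:E])).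
have hq : forall k, q k * bb = p k * g k.
  move=> k; apply: EFin_inj; rewrite !EFinM /q /p /g /bb -!Pfin //; try exact: measurableI.
  rewrite e2; exact: hindep.
have bb0 : 0 < bb.
  rewrite -lte_fin /bb -Pfin //; apply: lt_le_trans hpos2 _.
  apply: le_measure; rewrite ?inE //.
  by move=> w [hnu [h0 _]].
have hq' : forall k, q k = p k * (g k / bb).
  by move=> k; rewrite mulrA -hq mulfK // gt_eqF.
have S1 : (\sum_(0 <= k < K.+1) ((k%:R)%:E * P (A1 `&` [set w | X w = (k%:R)%:E])))%E
    = (\sum_(0 <= k < K.+1) k%:R * p k)%:E.
  rewrite -sumEFin big_nat [RHS]big_nat; apply: eq_bigr => k /andP[_ hk].
  by rewrite EFinM e1 // /p -Pfin //; exact: measurableI.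
have S1' : (\sum_(0 <= k < K.+1) P (A1 `&` [set w | X w = (k%:R)%:E]))%E
    = (\sum_(0 <= k < K.+1) p k)%:E.
  rewrite -sumEFin big_nat [RHS]big_nat; apply: eq_bigr => k /andP[_ hk].
  by rewrite e1 // /p -Pfin //; exact: measurableI.
have S2 : (\sum_(0 <= k < K.+1) ((k%:R)%:E * P (A2 `&` [set w | X w = (k%:R)%:E])))%E
    = (\sum_(0 <= k < K.+1) k%:R * q k)%:E.
  rewrite -sumEFin; apply: eq_bigr => k _.
  by rewrite EFinM /q -Pfin //; exact: measurableI.
have S2' : (\sum_(0 <= k < K.+1) P (A2 `&` [set w | X w = (k%:R)%:E]))%E
    = (\sum_(0 <= k < K.+1) q k)%:E.
  rewrite -sumEFin; apply: eq_bigr => k _.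
  by rewrite /q -Pfin //; exact: measurableI.
have sp : 0 < \sum_(0 <= k < K.+1) p k.
  by rewrite -lte_fin -S1' -P1.
have sq : 0 < \sum_(0 <= k < K.+1) q k.
  by rewrite -lte_fin -S2' -P2.
rewrite /cond_exp -/X -/A1 -/A2 I1 P1 I2 P2 S1 S1' S2 S2' /=.
rewrite -!EFinM -EFinB lee_fin subr_ge0.
apply: (@key R K.+1 p (fun k => g k / bb) q) => //.
- by move=> k; rewrite /p fine_ge0.
- move=> i j hij; rewrite ler_pM2r ?invr_gt0 //.
  rewrite -lee_fin /g -!Pfin //; try exact: measurableI.
  apply: le_measure; rewrite ?inE //; last first.
  + move=> w [hB /= hY]; split => //=; apply: le_trans hY; by rewrite lee_fin ler_nat.
  + exact: measurableI.
  + exact: measurableI.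
Qed.
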